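(* Let $A$ be a unital associative $\mathbb{K}$-algebra. Then $(T^+(A),\bar\bullet^\ell,P_A)$ is a $TD$-algebra with unit $1_A\otimes 1_{\mathbb{K}}$; that is, for all $x,y\in T^+(A)$, $$P_A(x)\,\bar\bullet^\ell\,P_A(y)=P_A\bigl(x\,\bar\bullet^\ell\,P_A(y)+P_A(x)\,\bar\bullet^\ell\,y-x\,\bar\bullet^\ell\,P_A(1_A)\,\bar\bullet^\ell\,y\bigr),$$ where $P_A(1_A)=1_A\otimes1_A$.
   Context: $\mathbb{K}$ is a field of characteristic $0$, $A$ has product $[a;b]$ and unit $1_A$. $T(A)=\bigoplus_{n\ge0}A^{\otimes n}$ with $A^{\otimes0}=\mathbb{K}1_{\mathbb{K}}$; $a\otimes1_{\mathbb{K}}$ is identified with $a$. The left-shift shuffle $\bullet^\ell$ is the bilinear product on $T(A)$ with $k1_{\mathbb{K}}\bullet^\ell U=kU=U\bullet^\ell k1_{\mathbb{K}}$ and, for $a,b\in A$, $U,V\in T(A)$, $(a\otimes U)\bullet^\ell(b\otimes V)=a\otimes\bigl(U\bullet^\ell(b\otimes V)\bigr)+b\otimes\bigl((a\otimes U)\bullet^\ell V\bigr)-[a;b]\otimes1_A\otimes(U\bullet^\ell V)$; it is associative with unit $1_{\mathbb{K}}$. $T^+(A):=A\otimes T(A)=\bigoplus_{n\ge1}A^{\otimes n}$ with product $(a\otimes U)\,\bar\bullet^\ell\,(b\otimes V):=[a;b]\otimes(U\bullet^\ell V)$ and unit $1_A\otimes1_{\mathbb{K}}$ (identified with $1_A$).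 $P_A:T^+(A)\to T^+(A)$ is the linear map $P_A(a_1\otimes\cdots\otimes a_n)=1_A\otimes a_1\otimes\cdots\otimes a_n$. A $TD$-algebra is a pair $(B,P)$, $B$ a unital associative algebra, $P:B\to B$ linear with $P(x)P(y)=P\bigl(P(x)y+xP(y)\bigr)-P\bigl(x\,P(1_B)\,y\bigr)$ for all $x,y$. *)

(* Defs.v *)
From HB Require Import structures.
From mathcomp Require Import all_boot all_order all_algebra.
Set Implicit Arguments. Unset Strict Implicit. Unset Printing Implicit Defensive.
Import GRing.Theory.
Local Open Scope ring_scope.

(* Elements of T(A) = (+)_n A^{(x)n} are represented by formal finite sums
   [:: (k_1, w_1); ...; (k_m, w_m)] standing for  sum_i k_i w_i,
   where a word w = [:: a_1; ...; a_n] stands for the pure tensor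
   a_1 (x) ... (x) a_n  (the empty word is 1_K in A^{(x)0} = K). *)
Section TA.
Variables (K : fieldType) (A : algType K).

Definition fsum := seq (K * seq A).

Definition fscale (k : K) (x : fsum) : fsum := [seq (k * p.1, p.2) | p <- x].
Definition fcons (a : A) (x : fsum) : fsum := [seq (p.1, a :: p.2) | p <- x].

Fixpoint shw (u : seq A) : seq A -> fsum :=
  fix shw' (v : seq A) : fsum :=
    match u, v with
    | [::], _ => [:: (1, v)]
    | _, [::] => [:: (1, u)]
    | a :: u', b :: v' =>
        fcons a (shw u' v) ++ fcons b (shw' v')
        ++ fscale (-1) (fcons (a * b) (fcons 1 (shw u' v')))
    end.

Definition shuf (x y : fsum) : fsum :=
  flatten [seq flatten [seq fscale (p.1 * q.1) (shw p.2 q.2) | q <- y] | p <- x].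

(* product \bar\bullet^l on T^+(A), on pure tensors:
   (a (x) U) bar (b (x) V) = [a;b] (x) (U \bullet^l V).
   (It is only applied to words of length >= 1.) *)
Definition barw (u v : seq A) : fsum :=
  match u, v with
  | a :: u', b :: v' => fcons (a * b) (shw u' v')
  | _, _ => [::]
  end.

Definition bar (x y : fsum) : fsum :=
  flatten [seq flatten [seq fscale (p.1 * q.1) (barw p.2 q.2) | q <- y] | p <- x].

Definition PA (x : fsum) : fsum := fcons 1 x.

Definition oneA : fsum := [:: (1, [:: 1])].

Definition in_Tplus (x : fsum) : bool := all (fun p => p.2 != [::]) x.

(* A family f : seq A -> V of maps A^n -> V that is linear in each slot,
   i.e. the data of linear maps (+)_n A^{(x)n} -> V. *)
Definition multilinear (V : lmodType K) (f : seq A -> V) : Prop :=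
  forall (u v : seq A) (k : K) (a b : A),
    f (u ++ (k *: a + b) :: v) = k *: f (u ++ a :: v) + f (u ++ b :: v).

Definition feval (V : lmodType K) (f : seq A -> V) (x : fsum) : V :=
  \sum_(p <- x) p.1 *: f p.2.

(* Two formal sums denote the same element of T(A) (the tensor products
   being defined by their universal property). *)
Definition teq (x y : fsum) : Prop :=
  forall (V : lmodType K) (f : seq A -> V), multilinear f -> feval f x = feval f y.

End TA.

(* Main.v *)
Require Import Defs.
From mathcomp Require Import all_boot all_order all_algebra.
Local Open Scope ring_scope.
From mathcomp Require Import ring.
Import GRing.Theory.

Section Aux.
Variables (K : fieldType) (A : algType K) (V : lmodType K).
Implicit Types (f g : seq A -> V) (x y : fsum A).

Lemma shw_cc (a b : A) (u v : seq A) :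
  shw (a :: u) (b :: v) = fcons a (shw u (b :: v)) ++ fcons b (shw (a :: u) v)
     ++ fscale (-1) (fcons (a * b) (fcons 1 (shw u v))).
Proof. by []. Qed.

Lemma barw_cc (a b : A) (u v : seq A) : barw (a :: u) (b :: v) = fcons (a * b) (shw u v).
Proof. by []. Qed.

Lemma shw_nil_r (u : seq A) : shw u [::] = [:: (1, u)].
Proof. by case: u. Qed.

Lemma feval_cat f x y : feval f (x ++ y) = feval f x + feval f y.
Proof. by rewrite /feval big_cat. Qed.

Lemma feval_fcons f a x : feval f (fcons a x) = feval (fun w => f (a :: w)) x.
Proof. by rewrite /feval /fcons big_map. Qed.

Lemma feval_fscale f k x : feval f (fscale k x) = k *: feval f x.
Proof.
rewrite /feval /fscale big_map scaler_sumr; apply: eq_bigr => p _.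
by rewrite scalerA.
Qed.

Lemma feval1 f w : feval f [:: (1, w)] = f w.
Proof. by rewrite /feval big_cons big_nil scale1r addr0. Qed.

Lemma feval_flatten f (s : seq (fsum A)) :
  feval f (flatten s) = \sum_(t <- s) feval f t.
Proof.
elim: s => [|t s IH]; first by rewrite /feval !big_nil.
by rewrite /= feval_cat IH big_cons.
Qed.

Lemma feval_bar f x y : feval f (bar x y) =
  \sum_(p <- x) p.1 *: \sum_(q <- y) q.1 *: feval f (barw p.2 q.2).
Proof.
rewrite /bar feval_flatten big_map; apply: eq_bigr => p _.
rewrite feval_flatten big_map scaler_sumr; apply: eq_bigr => q _.
by rewrite feval_fscale scalerA mulrC -scalerA.
Qed.

Lemma feval_swap (y : fsum A) (g : seq A -> seq A -> V) x :
  feval (fun w => \sum_(q <- y) q.1 *: g w q.2) x =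
  \sum_(q <- y) q.1 *: feval (fun w => g w q.2) x.
Proof.
rewrite /feval.
under eq_bigr do rewrite scaler_sumr.
rewrite exchange_big /=; apply: eq_bigr => q _.
rewrite scaler_sumr; apply: eq_bigr => r _.
by rewrite !scalerA mulrC.
Qed.

Lemma feval_ext f g x : (forall w, f w = g w) -> feval f x = feval g x.
Proof. by move=> H; rewrite /feval; apply: eq_bigr => p _; rewrite H. Qed.

Lemma lemA (U : seq A) f : feval f (shw U [:: 1]) = f (1 :: U).
Proof.
elim: U f => [|c U IH] f; first by rewrite feval1.
rewrite shw_cc !feval_cat !feval_fscale !feval_fcons IH !shw_nil_r.
rewrite /feval !big_cons !big_nil !scale1r !addr0 mulr1 scaleN1r.
by rewrite addrCA subrr addr0.
Qed.

Lemma lemB (W U : seq A) f :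
  feval f (shw (1 :: U) W) = feval f (fcons 1 (shw U W)).
Proof.
elim: W f => [|c W IH] f.
  by rewrite shw_nil_r /= shw_nil_r.
rewrite shw_cc !feval_cat !feval_fscale !feval_fcons IH feval_fcons mul1r.
by rewrite scaleN1r subrr addr0.
Qed.

Lemma pointwise f (a b : A) (U W : seq A) :
  let f1 := fun w => f (1 :: w) in
  feval f (barw (1 :: a :: U) (1 :: b :: W)) =
  feval f1 (barw (a :: U) (1 :: b :: W)) +
  (feval f1 (barw (1 :: a :: U) (b :: W)) +
   -1 *: feval (fun w => feval f1 (barw w (b :: W))) (barw (a :: U) [:: 1; 1])).
Proof.
move=> f1; rewrite !barw_cc shw_cc !mulr1 !mul1r.
rewrite feval_fcons !feval_cat !feval_fscale !feval_fcons.
rewrite lemA barw_cc feval_fcons lemB !feval_fcons.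
by [].
Qed.

Lemma Fadd (x y : fsum A) (g h : seq A -> seq A -> V) :
  \sum_(p <- x) p.1 *: \sum_(q <- y) q.1 *: (g p.2 q.2 + h p.2 q.2) =
  \sum_(p <- x) p.1 *: \sum_(q <- y) q.1 *: g p.2 q.2 +
  \sum_(p <- x) p.1 *: \sum_(q <- y) q.1 *: h p.2 q.2.
Proof.
rewrite -big_split /=; apply: eq_bigr => p _; rewrite -scalerDr -big_split /=.
by congr (_ *: _); apply: eq_bigr => q _; rewrite scalerDr.
Qed.

Lemma Fscale (x y : fsum A) (k : K) (g : seq A -> seq A -> V) :
  \sum_(p <- x) p.1 *: \sum_(q <- y) q.1 *: (k *: g p.2 q.2) =
  k *: \sum_(p <- x) p.1 *: \sum_(q <- y) q.1 *: g p.2 q.2.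
Proof.
rewrite scaler_sumr; apply: eq_bigr => p _; rewrite !scaler_sumr; apply: eq_bigr => q _.
by rewrite !scalerA; congr (_ *: _); ring.
Qed.
End Aux.


Theorem proposition4p7 (K : fieldType) (A : algType K)
  (charK0 : [pchar K] =i pred0) (x y : fsum A) :
  in_Tplus x -> in_Tplus y ->
  teq (bar (PA x) (PA y))
      (PA (bar x (PA y) ++ bar (PA x) y
           ++ fscale (-1) (bar (bar x (PA (oneA A))) y))).
Proof.
move=> Hx Hy V f _.
set f1 := fun w => f (1 :: w).
have E3 : feval f1 (bar (bar x (PA (oneA A))) y) =
  \sum_(p <- x) p.1 *: \sum_(q <- y) q.1 *:
     feval (fun w => feval f1 (barw w q.2)) (barw p.2 [:: 1; 1]).
  transitivity (feval (fun w => \sum_(q <- y) q.1 *: feval f1 (barw w q.2))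
            (bar x (PA (oneA A)))).
    by rewrite feval_bar.
  rewrite feval_bar; apply: eq_bigr => p _.
  rewrite /= big_cons big_nil scale1r addr0.
  by rewrite (@feval_swap _ _ _ y (fun w s => feval f1 (barw w s))).
rewrite /PA feval_fcons -/f1 !feval_cat feval_fscale E3 !feval_bar.
rewrite /fcons !big_map.
under eq_bigr do rewrite big_map.
under [X in _ = X + _]eq_bigr do rewrite big_map.
pose g1 := fun u v => feval f1 (barw u (1 :: v)).
pose g2 := fun u v => feval f1 (barw (1 :: u) v).
pose g3 := fun u v => feval (fun w => feval f1 (barw w v)) (barw u [:: 1; 1]).
transitivity (\sum_(p <- x) p.1 *: \sum_(q <- y) q.1 *:
   (g1 p.2 q.2 + (g2 p.2 q.2 + -1 *: g3 p.2 q.2))); last first.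
  rewrite (@Fadd _ _ _ x y g1 (fun u v => g2 u v + -1 *: g3 u v)).
  rewrite (@Fadd _ _ _ x y g2 (fun u v => -1 *: g3 u v)).
  by rewrite (@Fscale _ _ _ x y (-1) g3).
apply: eq_big_seq => p px; congr (_ *: _).
apply: eq_big_seq => q qy; congr (_ *: _).
move/allP: Hx => /(_ p px) Hp; move/allP: Hy => /(_ q qy) Hq.
case: p px Hp => k [|a U] // _ _; case: q qy Hq => l [|b W] // _ _.
change (feval f (barw (1 :: a :: U) (1 :: b :: W)) =
  g1 (a :: U) (b :: W) + (g2 (a :: U) (b :: W) + -1 *: g3 (a :: U) (b :: W))).
rewrite (@pointwise _ _ _ f a b U W).
by [].
Qed.
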